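(* Let $a,b,c,d\in\mathbb{R}$ and $w=a\mathbb{I}+bV_{(AB)}+cV_{(AC)}+dV_{(BC)}$ on $(\mathbb{C}^2)^{\otimes3}$. Then $w$ is local-positive if and only if $$a+b\cos^2\theta+c\cos^2\Omega+d\cos^2(\theta-\Omega)\ge0\quad\text{for all }\theta,\Omega\in\mathbb{R}.$$
   Context: $V_{(XY)}$ denotes the operator swapping tensor factors $X$ and $Y$ among the three qubit factors $A,B,C$. An operator $M$ on $(\mathbb{C}^2)^{\otimes3}$ is local-positive if $\langle\psi_1\psi_2\psi_3|M|\psi_1\psi_2\psi_3\rangle\ge0$ for all unit vectors $\psi_1,\psi_2,\psi_3\in\mathbb{C}^2$. *)

(* Defs.v *)
From Stdlib Require Import Reals.
Open Scope R_scope.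

Record Cx := mkCx { Re : R; Im : R }.

Definition Cadd (z w : Cx) : Cx := mkCx (Re z + Re w) (Im z + Im w).
Definition Cmul (z w : Cx) : Cx :=
  mkCx (Re z * Re w - Im z * Im w) (Re z * Im w + Im z * Re w).
Definition Cconj (z : Cx) : Cx := mkCx (Re z) (- Im z).
Definition Cof (r : R) : Cx := mkCx r 0.
Definition C0 : Cx := Cof 0.
Definition C1 : Cx := Cof 1.
Definition Cnorm2 (z : Cx) : R := Re z * Re z + Im z * Im z.

Definition qubit := bool -> Cx.
Definition unit_qubit (psi : qubit) : Prop :=
  Cnorm2 (psi false) + Cnorm2 (psi true) = 1.

(* Basis of (C^2)^{⊗3} = C^2_A ⊗ C^2_B ⊗ C^2_C, indexed by triples. *)
Definition idx3 := (bool * bool * bool)%type.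
Definition vec3 := idx3 -> Cx.
(* Operators on (C^2)^{⊗3} as 8x8 matrices: M x y = <x|M|y>. *)
Definition op3 := idx3 -> idx3 -> Cx.

Definition prod_state (p1 p2 p3 : qubit) : vec3 :=
  fun x => match x with (i, j, k) => Cmul (Cmul (p1 i) (p2 j)) (p3 k) end.

Definition sum2 (f : bool -> Cx) : Cx := Cadd (f false) (f true).
Definition sum3 (f : idx3 -> Cx) : Cx :=
  sum2 (fun i => sum2 (fun j => sum2 (fun k => f (i, j, k)))).

Definition expect (M : op3) (phi : vec3) : Cx :=
  sum3 (fun x => sum3 (fun y => Cmul (Cmul (Cconj (phi x)) (M x y)) (phi y))).

Definition idx3_eqb (x y : idx3) : bool :=
  match x, y with
  | (i, j, k), (i', j', k') => Bool.eqb i i' && Bool.eqb j j' && Bool.eqb k k'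
  end.

(* matrix of the permutation operator |y> |-> |s y> *)
Definition perm_op (s : idx3 -> idx3) : op3 :=
  fun x y => if idx3_eqb x (s y) then C1 else C0.

Definition Id3 : op3 := perm_op (fun y => y).
Definition V_AB : op3 := perm_op (fun y => match y with (i, j, k) => (j, i, k) end).
Definition V_AC : op3 := perm_op (fun y => match y with (i, j, k) => (k, j, i) end).
Definition V_BC : op3 := perm_op (fun y => match y with (i, j, k) => (i, k, j) end).

Definition op_add (M N : op3) : op3 := fun x y => Cadd (M x y) (N x y).
Definition op_scale (r : R) (M : op3) : op3 := fun x y => Cmul (Cof r) (M x y).

Definition local_positive (M : op3) : Prop :=
  forall p1 p2 p3 : qubit,
    unit_qubit p1 -> unit_qubit p2 -> unit_qubit p3 ->
    Im (expect M (prod_state p1 p2 p3)) = 0 /\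
    0 <= Re (expect M (prod_state p1 p2 p3)).

Definition w_op (a b c d : R) : op3 :=
  op_add (op_add (op_add (op_scale a Id3) (op_scale b V_AB))
                 (op_scale c V_AC)) (op_scale d V_BC).

(* Main.v *)
Require Import Defs.
From Stdlib Require Import Reals Lra Psatz.
Open Scope R_scope.

Definition nq (p : qubit) := Cnorm2 (p false) + Cnorm2 (p true).
Definition ov (p q : qubit) := Cnorm2 (sum2 (fun k => Cmul (Cconj (p k)) (q k))).

Lemma expect_w a b c d p1 p2 p3 :
  Im (expect (w_op a b c d) (prod_state p1 p2 p3)) = 0 /\
  Re (expect (w_op a b c d) (prod_state p1 p2 p3)) =
  a * nq p1 * nq p2 * nq p3 + b * ov p1 p2 * nq p3 + c * ov p1 p3 * nq p2
  + d * ov p2 p3 * nq p1.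
Proof.
  unfold expect, w_op, op_add, op_scale, Id3, V_AB, V_AC, V_BC, perm_op,
    prod_state, sum3, nq, ov, sum2.
  simpl.
  destruct (p1 false) as [x1 y1], (p1 true) as [x2 y2],
    (p2 false) as [x3 y3], (p2 true) as [x4 y4],
    (p3 false) as [x5 y5], (p3 true) as [x6 y6].
  unfold Cnorm2, Cadd, Cmul, Cconj, Cof, Defs.C1, Defs.C0; simpl.
  split; ring.
Qed.
Definition bx (p : qubit) := 2 * (Re (p false) * Re (p true) + Im (p false) * Im (p true)).
Definition by_ (p : qubit) := 2 * (Re (p false) * Im (p true) - Im (p false) * Re (p true)).
Definition bz (p : qubit) := Cnorm2 (p false) - Cnorm2 (p true).
Definition bdot (p q : qubit) := bx p * bx q + by_ p * by_ q + bz p * bz q.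

Lemma ov_bloch p q : 2 * ov p q = nq p * nq q + bdot p q.
Proof.
  unfold ov, bdot, bx, by_, bz, nq, sum2, Cnorm2, Cadd, Cmul, Cconj; simpl.
  destruct (p false), (p true), (q false), (q true); simpl. ring.
Qed.

Lemma bnorm p : bdot p p = nq p * nq p.
Proof.
  unfold bdot, bx, by_, bz, nq, Cnorm2.
  destruct (p false), (p true); simpl. ring.
Qed.

Lemma gram2 (a1 a2 a3 b1 b2 b3 : R) :
  (a1*a1+a2*a2+a3*a3)*(b1*b1+b2*b2+b3*b3) - (a1*b1+a2*b2+a3*b3)^2 =
  (a2*b3-a3*b2)^2 + (a3*b1-a1*b3)^2 + (a1*b2-a2*b1)^2.
Proof. ring. Qed.

Lemma gram3 (a1 a2 a3 b1 b2 b3 c1 c2 c3 : R) :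
  let g11 := a1*a1+a2*a2+a3*a3 in let g22 := b1*b1+b2*b2+b3*b3 in
  let g33 := c1*c1+c2*c2+c3*c3 in let g12 := a1*b1+a2*b2+a3*b3 in
  let g13 := a1*c1+a2*c2+a3*c3 in let g23 := b1*c1+b2*c2+b3*c3 in
  g11*g22*g33 + 2*g12*g13*g23 - g11*g23^2 - g22*g13^2 - g33*g12^2 =
  (a1*(b2*c3-b3*c2) - a2*(b1*c3-b3*c1) + a3*(b1*c2-b2*c1))^2.
Proof. intros; unfold g11, g22, g33, g12, g13, g23. ring. Qed.

Lemma key9 (a1 a2 a3 b1 b2 b3 c1 c2 c3 : R) :
  a1*a1+a2*a2+a3*a3 = 1 -> b1*b1+b2*b2+b3*b3 = 1 -> c1*c1+c2*c2+c3*c3 = 1 ->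
  let u := a1*b1+a2*b2+a3*b3 in let v := a1*c1+a2*c2+a3*c3 in
  let w := b1*c1+b2*c2+b3*c3 in
  0 <= 1 - u^2 /\ 0 <= 1 - v^2 /\ (w - u*v)^2 <= (1 - u^2) * (1 - v^2).
Proof.
  intros h1 h2 h3 u v w.
  pose proof (gram2 a1 a2 a3 b1 b2 b3) as G12.
  pose proof (gram2 a1 a2 a3 c1 c2 c3) as G13.
  pose proof (gram3 a1 a2 a3 b1 b2 b3 c1 c2 c3) as G. simpl in G.
  rewrite h1, h2, h3 in *. fold u v w in G12, G13, G. clearbody u v w.
  split; [|split].
  - assert (1 - u^2 = 1*1 - u^2) by ring.
    pose proof (pow2_ge_0 (a2 * b3 - a3 * b2)). pose proof (pow2_ge_0 (a3 * b1 - a1 * b3)).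
    pose proof (pow2_ge_0 (a1 * b2 - a2 * b1)). lra.
  - assert (1 - v^2 = 1*1 - v^2) by ring.
    pose proof (pow2_ge_0 (a2 * c3 - a3 * c2)). pose proof (pow2_ge_0 (a3 * c1 - a1 * c3)).
    pose proof (pow2_ge_0 (a1 * c2 - a2 * c1)). lra.
  - assert (E: (1 - u^2)*(1-v^2) - (w-u*v)^2 = 1 * 1 * 1 + 2 * u * v * w - 1 * (w * (w * 1)) - 1 * (v * (v * 1)) -
 1 * (u * (u * 1))) by ring.
    rewrite G in E.
    match type of E with _ = ?t * (?t * 1) => assert (0 <= t * (t*1)) by (rewrite Rmult_1_r; apply Rle_0_sqr) end.
    lra.
Qed.

Lemma key p1 p2 p3 : nq p1 = 1 -> nq p2 = 1 -> nq p3 = 1 ->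
  let u := bdot p1 p2 in let v := bdot p1 p3 in let w := bdot p2 p3 in
  0 <= 1 - u^2 /\ 0 <= 1 - v^2 /\ (w - u*v)^2 <= (1 - u^2) * (1 - v^2).
Proof.
  intros h1 h2 h3.
  pose proof (bnorm p1) as n1. pose proof (bnorm p2) as n2. pose proof (bnorm p3) as n3.
  rewrite h1 in n1. rewrite h2 in n2. rewrite h3 in n3. unfold bdot in *.
  apply key9; lra.
Qed.

Lemma between (K d P M z : R) : M <= z <= P -> 0 <= K + d * P -> 0 <= K + d * M ->
  0 <= K + d * z.
Proof.
  intros [h1 h2] hP hM. destruct (Rle_dec 0 d).
  - assert (d * M <= d * z) by (apply Rmult_le_compat_l; lra). lra.
  - assert (d * P <= d * z) by (apply Rmult_le_compat_neg_l; lra). lra.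
Qed.

Lemma abs_sq (z A B : R) : 0 <= B -> (z - A)^2 <= B^2 -> A - B <= z <= A + B.
Proof. intros hB h. split; nra. Qed.

Theorem mainTheorem12 (a b c d : R) :
  local_positive (w_op a b c d) <->
  (forall theta Omega : R,
     0 <= a + b * (cos theta) ^ 2 + c * (cos Omega) ^ 2
            + d * (cos (theta - Omega)) ^ 2).
Proof.
  split.
  - intros H th Om.
    set (p1 := fun k : bool => if k then Defs.C0 else Defs.C1).
    set (p2 := fun k : bool => if k then Cof (sin th) else Cof (cos th)).
    set (p3 := fun k : bool => if k then Cof (sin Om) else Cof (cos Om)).
    pose proof (sin2_cos2 th) as e1. pose proof (sin2_cos2 Om) as e2.
    unfold Rsqr in e1, e2.
    assert (u1 : unit_qubit p1) by (unfold unit_qubit, p1, Cnorm2, Defs.C0, Defs.C1, Cof; simpl; ring).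
    assert (u2 : unit_qubit p2) by (unfold unit_qubit, p2, Cnorm2, Defs.C0, Defs.C1, Cof; simpl; lra).
    assert (u3 : unit_qubit p3) by (unfold unit_qubit, p3, Cnorm2, Defs.C0, Defs.C1, Cof; simpl; lra).
    destruct (H p1 p2 p3 u1 u2 u3) as [_ Hr].
    destruct (expect_w a b c d p1 p2 p3) as [_ E]. rewrite E in Hr.
    unfold unit_qubit in u1, u2, u3. fold (nq p1) (nq p2) (nq p3) in u1, u2, u3.
    rewrite u1, u2, u3 in Hr.
    replace (ov p1 p2) with (cos th ^ 2) in Hr
      by (unfold ov, p1, p2, sum2, Cnorm2, Cadd, Cmul, Cconj, Defs.C0, Defs.C1, Cof; simpl; ring).
    replace (ov p1 p3) with (cos Om ^ 2) in Hr
      by (unfold ov, p1, p3, sum2, Cnorm2, Cadd, Cmul, Cconj, Defs.C0, Defs.C1, Cof; simpl; ring).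
    replace (ov p2 p3) with (cos (th - Om) ^ 2) in Hr
      by (rewrite cos_minus; unfold ov, p2, p3, sum2, Cnorm2, Cadd, Cmul, Cconj, Defs.C0, Defs.C1, Cof; simpl; ring).
    lra.
  - intros H p1 p2 p3 u1 u2 u3.
    destruct (expect_w a b c d p1 p2 p3) as [EI E]. split; [exact EI|]. rewrite E.
    unfold unit_qubit in u1, u2, u3. fold (nq p1) (nq p2) (nq p3) in u1, u2, u3.
    rewrite u1, u2, u3.
    pose proof (key p1 p2 p3 u1 u2 u3) as K. simpl in K.
    pose proof (ov_bloch p1 p2) as o12. pose proof (ov_bloch p1 p3) as o13.
    pose proof (ov_bloch p2 p3) as o23.
    rewrite u1, u2 in o12. rewrite u1, u3 in o13. rewrite u2, u3 in o23.
    set (x := ov p1 p2) in *. set (y := ov p1 p3) in *. set (z := ov p2 p3) in *.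
    assert (Ku : bdot p1 p2 = 2*x - 1) by lra.
    assert (Kv : bdot p1 p3 = 2*y - 1) by lra.
    assert (Kw : bdot p2 p3 = 2*z - 1) by lra.
    rewrite Ku, Kv, Kw in K. clearbody x y z. clear Ku Kv Kw o12 o13 o23 E EI.
    destruct K as [K1 [K2 K3]].
    assert (hx : 0 <= x <= 1) by nra. assert (hy : 0 <= y <= 1) by nra.
    set (s := sqrt x). set (t := sqrt y). set (s' := sqrt (1 - x)). set (t' := sqrt (1 - y)).
    assert (ss : s * s = x) by (apply sqrt_sqrt; lra).
    assert (tt : t * t = y) by (apply sqrt_sqrt; lra).
    assert (ss' : s' * s' = 1 - x) by (apply sqrt_sqrt; lra).
    assert (tt' : t' * t' = 1 - y) by (apply sqrt_sqrt; lra).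
    assert (s0 : 0 <= s) by apply sqrt_pos. assert (t0 : 0 <= t) by apply sqrt_pos.
    assert (s0' : 0 <= s') by apply sqrt_pos. assert (t0' : 0 <= t') by apply sqrt_pos.
    assert (sb : -1 <= s <= 1) by nra. assert (tb : -1 <= t <= 1) by nra.
    pose proof (cos_acos s sb) as cs. pose proof (sin_acos s sb) as sn.
    pose proof (cos_acos t tb) as ct. pose proof (sin_acos t tb) as st.
    unfold Rsqr in sn, st. rewrite ss in sn. rewrite tt in st.
    fold s' in sn. fold t' in st.
    pose proof (H (acos s) (acos t)) as H1.
    pose proof (H (acos s) (- acos t)) as H2.
    rewrite cos_minus, cs, ct, sn, st in H1.
    rewrite cos_neg, cos_minus, cos_neg, sin_neg, cs, ct, sn, st in H2.
    assert (sx : s^2 = x) by (rewrite <- ss; ring).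
    assert (ty : t^2 = y) by (rewrite <- tt; ring).
    rewrite sx, ty in H1, H2.
    replace (s * t + s' * - t') with (s*t - s'*t') in H2 by ring.
    replace (a * 1 * 1 * 1 + b * x * 1 + c * y * 1 + d * z * 1) with
      (a + b * x + c * y + d * z) by ring.
    apply (between (a + b * x + c * y) d ((s*t + s'*t')^2) ((s*t - s'*t')^2) z).
    + assert (A : (s*t + s'*t')^2 = (x*y + (1-x)*(1-y)) + 2*(s*t*s'*t')) by nra.
      assert (B : (s*t - s'*t')^2 = (x*y + (1-x)*(1-y)) - 2*(s*t*s'*t')) by nra.
      rewrite A, B. apply abs_sq.
      * assert (0 <= s*t) by nra. assert (0 <= s'*t') by nra.
        assert (0 <= s*t*(s'*t')) by nra. nra.
      * assert (E2 : (2*(s*t*s'*t'))^2 = (1 - (2*x-1)^2) * (1 - (2*y-1)^2) / 4).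
        { replace ((2*(s*t*s'*t'))^2) with (4 * (s*s) * (t*t) * (s'*s') * (t'*t')) by ring.
          rewrite ss, tt, ss', tt'. field. }
        rewrite E2.
        replace ((z - (x*y + (1-x)*(1-y)))^2) with ((2*z - 1 - (2*x-1)*(2*y-1))^2 / 4) by field.
        simpl. lra.
    + exact H1.
    + exact H2.
Qed.
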